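(* Let \(X\) be a nonempty set and let \(\Phi\) be a mapping with domain \(X^{2}\). Then the following conditions are equivalent. (i) \(\Phi\) is combinatorially similar to a pseudoultrametric. (ii) There is \(b_0 \in \Phi(X^{2})\) such that \(\Phi(x,x) = b_0\) for every \(x \in X\), the binary relation \(\preccurlyeq_{\Phi} := u_{\Phi}^{t} \cup \Delta_{\Phi(X^{2})}\) is a partial order on \(\Phi(X^{2})\), \(b_0\) is the smallest element of \((\Phi(X^{2}), \preccurlyeq_{\Phi})\), \(\Phi\) is a \(\preccurlyeq_{\Phi}\)-pseudoultrametric on \(X\), and there is a linear order \(\preccurlyeq\) on \(\Phi(X^{2})\) such that \(\preccurlyeq_{\Phi} \subseteq \preccurlyeq\) and \((\Phi(X^{2}), \preccurlyeq)\) is order-isomorphic to a subposet of \(([0,\infty), \leqslant)\). (iii) \(\Phi\) is symmetric, there is \(a_0 \in \Phi(X^{2})\) for which \(\Phi\) is \(a_0\)-coherent, for every triple \(\langle x_1, x_2, x_3\rangle\) of points of \(X\) there is a permutation \((i_1,i_2,i_3)\) of \((1,2,3)\) such that \(\Phi(x_{i_1}, x_{i_2}) = \Phi(x_{i_2}, x_{i_3})\), and there is a linear order \(\preccurlyeq\) on \(\Phi(X^{2})\) such that \(a_0\) is the smallest element of \((\Phi(X^{2}), \preccurlyeq)\), \(u_{\Phi} \subseteq \preccurlyeq\), and \((\Phi(X^{2}), \preccurlyeq)\) is order-isomorphic to a subposet of \(([0,\infty), \leqslant)\).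
   Context: For a mapping \(F\) with domain \(A\), \(F(A)\) denotes its range; \(\Delta_S=\{\langle s,s\rangle:s\in S\}\). A pseudoultrametric on a set \(Z\) is a symmetric \(d\colon Z^2\to[0,\infty)\) with \(d(z,z)=0\) and \(d(x,y)\le\max\{d(x,z),d(z,y)\}\). For a poset \((Q,\preccurlyeq_Q)\) with smallest element \(q_0\), a mapping \(d\colon Z^2\to Q\) is a \(\preccurlyeq_Q\)-pseudoultrametric if \(d\) is symmetric, \(d(z,z)=q_0\) for all \(z\), and for every triple \(\langle z_1,z_2,z_3\rangle\) in \(Z\) there is a permutation \((i_1,i_2,i_3)\) of \((1,2,3)\) with \(d(z_{i_1},z_{i_3})\preccurlyeq_Q d(z_{i_1},z_{i_2})=d(z_{i_2},z_{i_3})\). For nonempty sets \(X,Y\) and mappings \(\Phi\) with domain \(X^2\), \(\Psi\) with domain \(Y^2\), \(\Phi\) is combinatorially similar to \(\Psi\) if there are bijections \(f\colon \Phi(X^2)\to\Psi(Y^2)\) and \(g\colon Y\to X\) with \(\Psi(x,y)=f(\Phi(g(x),g(y)))\) for all \(x,y\in Y\). \(\Phi\) is strongly consistent with an equivalence relation \(R\) on \(X\) if \(\langle x_1,x_2\rangle,\langle x_3,x_4\rangle\in R\) imply \(\Phi(x_1,x_3)=\Phi(x_2,x_4)\); \(\Phi\) is \(a_0\)-coherent (\(a_0\in\Phi(X^2)\)) if \(\Phi^{-1}(a_0)\) is an equivalence relation on \(X\) and \(\Phi\) is strongly consistent with it. For \(Y=\Phi(X^2)\), \(\langle y_1,y_2\rangle\in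 u_\Phi\) iff \(y_1,y_2\in Y\) and there are \(x_1,x_2,x_3\in X\) with \(y_1=\Phi(x_1,x_3)\), \(y_2=\Phi(x_1,x_2)=\Phi(x_2,x_3)\). The transitive closure is \(\gamma^t=\bigcup_{n\ge1}\gamma^n\), \(\gamma^{n+1}=\gamma^n\circ\gamma\), with \(\langle x,y\rangle\in\alpha\circ\beta\) iff \(\exists z\): \(\langle x,z\rangle\in\alpha\), \(\langle z,y\rangle\in\beta\). *)

(* Defs.v *)
From Stdlib Require Import Reals Relations.
Open Scope R_scope.

Section Defs.
Context {X Y : Type}.

Definition rng {A B : Type} (Phi : A -> A -> B) (y : B) : Prop :=
  exists x1 x2, Phi x1 x2 = y.

Definition some_perm {Z : Type} (P : Z -> Z -> Z -> Prop) (z1 z2 z3 : Z) : Prop :=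
  P z1 z2 z3 \/ P z1 z3 z2 \/ P z2 z1 z3 \/ P z2 z3 z1 \/ P z3 z1 z2 \/ P z3 z2 z1.

Definition symmetric_map {Z W : Type} (d : Z -> Z -> W) : Prop :=
  forall x y, d x y = d y x.

Definition bijective_map {A B : Type} (g : A -> B) : Prop :=
  (forall a1 a2, g a1 = g a2 -> a1 = a2) /\ (forall b, exists a, g a = b).

Definition partial_order_on {T : Type} (A : T -> Prop) (r : T -> T -> Prop) : Prop :=
  (forall a b, r a b -> A a /\ A b) /\
  (forall a, A a -> r a a) /\
  (forall a b, r a b -> r b a -> a = b) /\
  (forall a b c, r a b -> r b c -> r a c).

Definition linear_order_on {T : Type} (A : T -> Prop) (r : T -> T -> Prop) : Prop :=
  partial_order_on A r /\ (forall a b, A a -> A b -> r a b \/ r b a).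

Definition smallest_of {T : Type} (A : T -> Prop) (r : T -> T -> Prop) (t : T) : Prop :=
  A t /\ forall a, A a -> r t a.

Definition embeds_in_nonneg_reals {T : Type} (A : T -> Prop) (r : T -> T -> Prop) : Prop :=
  exists h : T -> R,
    (forall a, A a -> 0 <= h a) /\
    (forall a b, A a -> A b -> h a = h b -> a = b) /\
    (forall a b, A a -> A b -> (r a b <-> h a <= h b)).

Definition pseudoultrametric {Z : Type} (d : Z -> Z -> R) : Prop :=
  (forall x y, 0 <= d x y) /\ symmetric_map d /\ (forall z, d z z = 0) /\
  (forall x y z, d x y <= Rmax (d x z) (d z y)).

Definition comb_similar {Z W : Type} (Phi : X -> X -> Y) (Psi : Z -> Z -> W) : Prop :=
  exists (f : Y -> W) (g : Z -> X),
    (forall y, rng Phi y -> rng Psi (f y)) /\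
    (forall y1 y2, rng Phi y1 -> rng Phi y2 -> f y1 = f y2 -> y1 = y2) /\
    (forall w, rng Psi w -> exists y, rng Phi y /\ f y = w) /\
    bijective_map g /\
    (forall x y, Psi x y = f (Phi (g x) (g y))).

Definition comb_similar_to_pum (Phi : X -> X -> Y) : Prop :=
  exists (Z : Type) (d : Z -> Z -> R), pseudoultrametric d /\ comb_similar Phi d.

Definition u_rel (Phi : X -> X -> Y) (y1 y2 : Y) : Prop :=
  rng Phi y1 /\ rng Phi y2 /\
  exists x1 x2 x3, y1 = Phi x1 x3 /\ y2 = Phi x1 x2 /\ y2 = Phi x2 x3.

Definition preceq_Phi (Phi : X -> X -> Y) (y1 y2 : Y) : Prop :=
  clos_trans Y (u_rel Phi) y1 y2 \/ (rng Phi y1 /\ y1 = y2).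

Definition Q_pseudoultrametric {Z Q : Type} (le : Q -> Q -> Prop) (q0 : Q)
    (d : Z -> Z -> Q) : Prop :=
  symmetric_map d /\ (forall z, d z z = q0) /\
  (forall z1 z2 z3,
     some_perm (fun a b c => le (d a c) (d a b) /\ d a b = d b c) z1 z2 z3).

Definition coherent (Phi : X -> X -> Y) (a0 : Y) : Prop :=
  (forall x, Phi x x = a0) /\
  (forall x y, Phi x y = a0 -> Phi y x = a0) /\
  (forall x y z, Phi x y = a0 -> Phi y z = a0 -> Phi x z = a0) /\
  (forall x1 x2 x3 x4, Phi x1 x2 = a0 -> Phi x3 x4 = a0 -> Phi x1 x3 = Phi x2 x4).

End Defs.

(* Main.v *)
Require Import Defs.
From Stdlib Require Import Reals Relations Lra.
Open Scope R_scope.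

Lemma sp_map {Z : Type} (P Q : Z -> Z -> Z -> Prop) a b c :
  (forall x y z, P x y z -> Q x y z) -> some_perm P a b c -> some_perm Q a b c.
Proof. unfold some_perm; intros H; intuition. Qed.

Lemma pum_iso {Z : Type} (r : Z -> Z -> R) : pseudoultrametric r ->
  forall x1 x2 x3, some_perm (fun a b c => r a c <= r a b /\ r a b = r b c) x1 x2 x3.
Proof.
  intros [Hn [Hs [Hz Hu]]] x1 x2 x3. unfold some_perm.
  pose proof (Hu x1 x3 x2) as U1. pose proof (Hu x1 x2 x3) as U2.
  pose proof (Hu x2 x3 x1) as U3.
  pose proof (Hs x3 x2). pose proof (Hs x2 x1). pose proof (Hs x3 x1).
  unfold Rmax in *.
  repeat match goal with H : context [Rle_dec ?a ?b] |- _ =>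
        destruct (Rle_dec a b) end; try lra;
  first [ left; split; lra | right; left; split; lra | right; right; left; split; lra ].
Qed.

Lemma iso_pum {Z : Type} (r : Z -> Z -> R) : symmetric_map r ->
  (forall x1 x2 x3, some_perm (fun a b c => r a c <= r a b /\ r a b = r b c) x1 x2 x3) ->
  forall x y z, r x y <= Rmax (r x z) (r z y).
Proof.
  intros Hs H x y z.
  pose proof (Hs x y). pose proof (Hs x z). pose proof (Hs y z).
  destruct (H x y z) as [?|[?|[?|[?|[?|?]]]]]; unfold Rmax;
  destruct (Rle_dec (r x z) (r z y)); lra.
Qed.

Section Main.
Context {X Y : Type} (x0 : X) (Phi : X -> X -> Y).

Definition Ph (h : Y -> R) : Prop :=
  (forall y1 y2, rng Phi y1 -> rng Phi y2 -> h y1 = h y2 -> y1 = y2) /\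
  pseudoultrametric (fun x y => h (Phi x y)).

Lemma lemA : comb_similar_to_pum Phi <-> exists h, Ph h.
Proof.
  split.
  - intros [Z [d [[Hn [Hs [Hz Hu]]] [f [g [H1 [H2 [H3 [[Gi Gs] H5]]]]]]]]].
    exists f. split; [exact H2|].
    repeat split.
    + intros x y. destruct (Gs x) as [a <-]. destruct (Gs y) as [b <-].
      rewrite <- H5. apply Hn.
    + intros x y. destruct (Gs x) as [a <-]. destruct (Gs y) as [b <-].
      rewrite <- !H5. apply Hs.
    + intros x. destruct (Gs x) as [a <-]. rewrite <- H5. apply Hz.
    + intros x y z. destruct (Gs x) as [a <-]. destruct (Gs y) as [b <-].
      destruct (Gs z) as [c <-]. rewrite <- !H5. apply Hu.
  - intros [h [Hi Hp]]. exists X, (fun x y => h (Phi x y)). split; [exact Hp|].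
    exists h, (fun x => x). repeat split.
    + intros y [a [b <-]]. exists a, b. reflexivity.
    + exact Hi.
    + intros w [a [b <-]]. exists (Phi a b). split; [exists a, b|]; reflexivity.
    + intros a1 a2 E; exact E.
    + intros b; exists b; reflexivity.
Qed.

Lemma ct_rng y1 y2 : clos_trans Y (u_rel Phi) y1 y2 -> rng Phi y1 /\ rng Phi y2.
Proof.
  induction 1 as [a b [? [? _]]|a b c _ [? _] _ [_ ?]]; auto.
Qed.

Lemma lemB h : Ph h ->
  (exists b0 : Y, rng Phi b0 /\ (forall x, Phi x x = b0) /\
      partial_order_on (rng Phi) (preceq_Phi Phi) /\
      smallest_of (rng Phi) (preceq_Phi Phi) b0 /\
      Q_pseudoultrametric (preceq_Phi Phi) b0 Phi /\
      exists le : Y -> Y -> Prop,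
        linear_order_on (rng Phi) le /\
        (forall y1 y2, preceq_Phi Phi y1 y2 -> le y1 y2) /\
        embeds_in_nonneg_reals (rng Phi) le)
  /\
   (symmetric_map Phi /\
    exists a0 : Y, rng Phi a0 /\ coherent Phi a0 /\
      (forall x1 x2 x3,
         some_perm (fun a b c => Phi a b = Phi b c) x1 x2 x3) /\
      exists le : Y -> Y -> Prop,
        linear_order_on (rng Phi) le /\
        smallest_of (rng Phi) le a0 /\
        (forall y1 y2, u_rel Phi y1 y2 -> le y1 y2) /\
        embeds_in_nonneg_reals (rng Phi) le).
Proof.
  intros [Hi Hp]. pose proof Hp as [Hn [Hs [Hz Hu]]].
  assert (R1 : forall a b, rng Phi (Phi a b)) by (intros a b; exists a, b; reflexivity).
  assert (symP : symmetric_map Phi).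
  { intros x y. apply Hi; auto; apply Hs. }
  assert (diag : forall x, Phi x x = Phi x0 x0).
  { intros x. apply Hi; auto; rewrite !Hz; reflexivity. }
  assert (h0 : h (Phi x0 x0) = 0) by apply Hz.
  assert (urel_le : forall y1 y2, u_rel Phi y1 y2 -> h y1 <= h y2).
  { intros y1 y2 [_ [_ [a [b [c [E1 [E2 E3]]]]]]].
    pose proof (Hu a c b) as U. rewrite E1.
    rewrite <- E2, <- E3 in U. unfold Rmax in U. destruct Rle_dec; lra. }
  assert (ct_le : forall y1 y2, clos_trans Y (u_rel Phi) y1 y2 -> h y1 <= h y2).
  { induction 1; eauto. lra. }
  assert (pre_le : forall y1 y2, preceq_Phi Phi y1 y2 ->
            h y1 <= h y2 /\ rng Phi y1 /\ rng Phi y2).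
  { intros y1 y2 [C|[Hr E]].
    - split; [apply ct_le; auto | apply ct_rng; auto].
    - subst. repeat split; auto. lra. }
  assert (iso : forall x1 x2 x3, some_perm (fun a b c =>
             u_rel Phi (Phi a c) (Phi a b) /\ Phi a b = Phi b c) x1 x2 x3).
  { intros x1 x2 x3. eapply sp_map; [|apply (pum_iso _ Hp)].
    intros a b c [L E]. simpl in *.
    assert (E' : Phi a b = Phi b c) by (apply Hi; auto).
    split; [|exact E'].
    repeat split; auto. exists a, b, c. auto. }
  set (le := fun y1 y2 => rng Phi y1 /\ rng Phi y2 /\ h y1 <= h y2).
  assert (Hnn : forall y, rng Phi y -> 0 <= h y).
  { intros y [a [b <-]]. apply Hn. }
  assert (Lin : linear_order_on (rng Phi) le).
  { unfold le. split; [split; [|split; [|split]]|].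
    - intros u v [? [? ?]]; split; auto.
    - intros u ?; repeat split; auto; lra.
    - intros u v [? [? ?]] [? [? ?]]. apply Hi; auto; lra.
    - intros u v w [? [? ?]] [? [? ?]]; repeat split; auto; lra.
    - intros u v Hu' Hv'. destruct (Rle_dec (h u) (h v)); [left|right]; repeat split; auto; lra. }
  assert (Emb : embeds_in_nonneg_reals (rng Phi) le).
  { exists h. unfold le. split; [exact Hnn|split].
    - intros u v ? ? E; apply Hi; auto.
    - intros u v ? ?. split; [intros [? [? ?]]; auto | intros; auto]. }
  split.
  - exists (Phi x0 x0). split; [auto|]. split; [auto|]. split; [|split; [|split]].
    + split; [|split; [|split]].
      * intros u v H. apply pre_le in H. tauto.
      * intros u Hu'. right; auto.
      * intros u v H1 H2. apply pre_le in H1. apply pre_le in H2.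
        apply Hi; try tauto. lra.
      * intros u v w [C1|[? E1]] [C2|[? E2]]; subst;
        first [left; assumption | (right; split; [assumption|reflexivity]) | left; eapply t_trans; eassumption].
    + split; [auto|]. intros u [p [q <-]]. left. apply t_step. split; [auto|split; [auto|]].
      exists p, q, p. rewrite (diag p). split; [reflexivity|split; [reflexivity|apply symP]].
    + split; [exact symP|split; [exact diag|]].
      intros z1 z2 z3. eapply sp_map; [|apply iso].
      intros a b c [U E]. split; auto. left. apply t_step; auto.
    + exists le. split; [exact Lin|split; [|exact Emb]].
      intros y1 y2 H; apply pre_le in H. unfold le; tauto.
  - split; [exact symP|]. exists (Phi x0 x0). split; [auto|]. split; [split; [|split; [|split]]|split].
    + exact diag.
    + intros x y E. rewrite symP; auto.
    + intros x y z E1 E2. apply Hi; auto.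
      pose proof (Hu x z y) as U. pose proof (Hn x z).
      rewrite E1, E2 in U. rewrite h0 in U. unfold Rmax in U.
      destruct Rle_dec; lra.
    + intros x1 x2 x3 x4 E1 E2.
      assert (A1 : h (Phi x1 x2) = 0) by (rewrite E1; auto).
      assert (A2 : h (Phi x3 x4) = 0) by (rewrite E2; auto).
      apply Hi; auto.
      pose proof (Hu x1 x3 x2). pose proof (Hu x2 x4 x3).
      pose proof (Hu x2 x3 x1). pose proof (Hu x1 x4 x3).
      pose proof (Hs x1 x2). pose proof (Hs x3 x4).
      pose proof (Hn x1 x3). pose proof (Hn x2 x4).
      pose proof (Hu x1 x3 x4). pose proof (Hu x1 x4 x2).
      pose proof (Hu x2 x4 x1).
      pose proof (Hs x4 x3). pose proof (Hs x2 x1).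
      unfold Rmax in *.
      repeat match goal with H : context [Rle_dec ?a ?b] |- _ =>
        destruct (Rle_dec a b) end; lra.
    + intros x1 x2 x3. eapply sp_map; [|apply iso]. intros a b c [_ E]; auto.
    + exists le. split; [exact Lin|split; [|split; [|exact Emb]]].
      * split; [auto|]. intros u Hu'. unfold le. split; [auto|split; auto].
        rewrite h0. apply Hnn; auto.
      * intros y1 y2 H. pose proof (urel_le _ _ H). destruct H as [? [? _]].
        unfold le; auto.
Qed.

Lemma lemC (b0 : Y) (le : Y -> Y -> Prop) (Q : X -> X -> X -> Prop) :
  symmetric_map Phi -> (forall x, Phi x x = b0) -> rng Phi b0 ->
  smallest_of (rng Phi) le b0 ->
  embeds_in_nonneg_reals (rng Phi) le ->
  (forall x1 x2 x3, some_perm Q x1 x2 x3) ->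
  (forall a b c, Q a b c -> le (Phi a c) (Phi a b) /\ Phi a b = Phi b c) ->
  exists h, Ph h.
Proof.
  intros Sy Dg Rb [_ Sm] [hh [Hn [Hi Hio]]] HQ HQl.
  assert (R1 : forall a b, rng Phi (Phi a b)) by (intros a b; exists a, b; reflexivity).
  exists (fun y => hh y - hh b0). split.
  - intros y1 y2 r1 r2 E. apply Hi; auto. lra.
  - assert (S : symmetric_map (fun x y => hh (Phi x y) - hh b0)).
    { intros x y. simpl. rewrite Sy. reflexivity. }
    repeat split.
    + intros x y. pose proof (Sm _ (R1 x y)). apply Hio in H; auto. lra.
    + exact S.
    + intros z. rewrite Dg. lra.
    + apply iso_pum; auto. intros x1 x2 x3. eapply sp_map; [|apply HQ].
      intros a b c Hq. apply HQl in Hq as [L E]. apply Hio in L; auto.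
      split; [lra|]. rewrite E. reflexivity.
Qed.

End Main.

Theorem theorem4p21 (X Y : Type) (x0 : X) (Phi : X -> X -> Y) :
  (comb_similar_to_pum Phi <->
   (exists b0 : Y, rng Phi b0 /\ (forall x, Phi x x = b0) /\
      partial_order_on (rng Phi) (preceq_Phi Phi) /\
      smallest_of (rng Phi) (preceq_Phi Phi) b0 /\
      Q_pseudoultrametric (preceq_Phi Phi) b0 Phi /\
      exists le : Y -> Y -> Prop,
        linear_order_on (rng Phi) le /\
        (forall y1 y2, preceq_Phi Phi y1 y2 -> le y1 y2) /\
        embeds_in_nonneg_reals (rng Phi) le))
  /\
  (comb_similar_to_pum Phi <->
   (symmetric_map Phi /\
    exists a0 : Y, rng Phi a0 /\ coherent Phi a0 /\
      (forall x1 x2 x3,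
         some_perm (fun a b c => Phi a b = Phi b c) x1 x2 x3) /\
      exists le : Y -> Y -> Prop,
        linear_order_on (rng Phi) le /\
        smallest_of (rng Phi) le a0 /\
        (forall y1 y2, u_rel Phi y1 y2 -> le y1 y2) /\
        embeds_in_nonneg_reals (rng Phi) le)).
Proof.
  rewrite lemA. split; split.
  - intros [h Hh]. apply (lemB x0 Phi h Hh).
  - intros [b0 [Rb [Dg [_ [[_ Sm] [[Sy [_ Tr]] [le [Lin [Inc Emb]]]]]]]]].
    apply (lemC Phi b0 le
      (fun a b c => preceq_Phi Phi (Phi a c) (Phi a b) /\ Phi a b = Phi b c)); auto.
    + split; auto.
    + intros a b c [P E]; auto.
  - intros [h Hh]. apply (lemB x0 Phi h Hh).
  - intros [Sy [a0 [Ra [[Dg _] [Tr [le [Lin [Sm [Inc Emb]]]]]]]]].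
    apply (lemC Phi a0 le (fun a b c => Phi a b = Phi b c)); auto.
    intros a b c E. split; auto. apply Inc.
    repeat split; try (eexists; eexists; reflexivity).
    exists a, b, c. auto.
Qed.
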